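(* Let $\Sigma_0>0$, $\sigma_u>0$, $\Delta t=\tfrac12$, and let real numbers $\beta_1,\beta_2,\lambda_1,\lambda_2,\alpha_1,\Sigma_1$ with $\alpha_2=0$ form a two-period linear equilibrium of Kyle's (1985) model, i.e. for $n=1,2$: $$\beta_n=\frac{1-2\alpha_n\lambda_n}{2\lambda_n(1-\alpha_n\lambda_n)},\quad \lambda_n=\frac{\beta_n\Sigma_{n-1}}{\beta_n^2\Sigma_{n-1}+\sigma_u^2\Delta t},\quad \Sigma_n=(1-\lambda_n\beta_n)\Sigma_{n-1},\quad \lambda_n(1-\alpha_n\lambda_n)>0,$$ and $\alpha_1=\dfrac{1}{4\lambda_2(1-\alpha_2\lambda_2)}$. Define $\ell(b)=\dfrac{b\Sigma_0}{b^2\Sigma_0+\sigma_u^2\Delta t}$ for $b\in\mathbb R$ (the first-period pricing rule as a function of the first-period trading intensity under semi-strong market efficiency). Then $\ell'(\beta_1)>0$.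
   Context: Kyle's two-period model: asset value $v\sim N(p_0,\Sigma_0)$; noise orders $u_1,u_2$ i.i.d. $N(0,\sigma_u^2\Delta t)$ independent of $v$; the insider submits $x_n=\beta_n(v-p_{n-1})$; prices move by $p_n-p_{n-1}=\lambda_n(x_n+u_n)$. In Kyle's equilibrium the insider treats $\lambda_n$ as a constant not affected by her choice of $\beta_n$, which yields the displayed equations; the equation $\lambda_n=\beta_n\Sigma_{n-1}/(\beta_n^2\Sigma_{n-1}+\sigma_u^2\Delta t)$ expresses semi-strong market efficiency $p_n=E[v\mid x_1+u_1,\dots,x_n+u_n]$, with $\Sigma_n$ the conditional variance of $v$ after $n$ rounds. *)

(* Defs.v *)
From Stdlib Require Import Reals.
Open Scope R_scope.

Definition dt : R := / 2.

(* Insider's first-order condition: beta_n as a function of alpha_n, lambda_n *)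
Definition beta_rule (alpha lambda : R) : R :=
  (1 - 2 * alpha * lambda) / (2 * lambda * (1 - alpha * lambda)).

Definition lambda_rule (beta Sigma sigma_u : R) : R :=
  beta * Sigma / (beta ^ 2 * Sigma + sigma_u ^ 2 * dt).

Definition ell (Sigma0 sigma_u : R) (b : R) : R := lambda_rule b Sigma0 sigma_u.

(* Main.v *)
Require Import Defs.
From Stdlib Require Import Reals Lra Psatz.
From Coquelicot Require Import Coquelicot.
Open Scope R_scope.

Lemma ell_deriv S s b : 0 < S -> 0 < s ->
  derivable_pt_lim (ell S s) b (S*(s^2*dt - b^2*S)/(b^2*S+s^2*dt)^2).
Proof.
intros hS hs.
assert (hD : 0 < b^2*S + s^2*dt) by (unfold dt; nra).
apply is_derive_Reals. unfold ell, lambda_rule.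
auto_derive. lra. unfold dt in *. field. lra.
Qed.

Theorem proposition1
  (Sigma0 sigma_u beta1 beta2 lambda1 lambda2 alpha1 alpha2 Sigma1 Sigma2 : R)
  (hS0 : 0 < Sigma0) (hsu : 0 < sigma_u) (ha2 : alpha2 = 0)
  (hb1 : beta1 = beta_rule alpha1 lambda1)
  (hb2 : beta2 = beta_rule alpha2 lambda2)
  (hl1 : lambda1 = lambda_rule beta1 Sigma0 sigma_u)
  (hl2 : lambda2 = lambda_rule beta2 Sigma1 sigma_u)
  (hS1 : Sigma1 = (1 - lambda1 * beta1) * Sigma0)
  (hS2 : Sigma2 = (1 - lambda2 * beta2) * Sigma1)
  (hsoc1 : 0 < lambda1 * (1 - alpha1 * lambda1))
  (hsoc2 : 0 < lambda2 * (1 - alpha2 * lambda2))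
  (ha1 : alpha1 = 1 / (4 * lambda2 * (1 - alpha2 * lambda2))) :
  exists d : R, derivable_pt_lim (ell Sigma0 sigma_u) beta1 d /\ 0 < d.
Proof.
  subst alpha2.
  assert (hl2p : 0 < lambda2) by nra.
  assert (ha1p : 0 < alpha1).
  { rewrite ha1. apply Rdiv_lt_0_compat; nra. }
  assert (hl1p : 0 < lambda1).
  { destruct (Rlt_or_le 0 lambda1) as [h|h]; auto.
    exfalso. assert (alpha1*lambda1 <= 0) by nra. nra. }
  assert (hx : 0 < 1 - alpha1*lambda1) by nra.
  assert (hbe : beta1 * (2*lambda1*(1-alpha1*lambda1)) = 1 - 2*alpha1*lambda1).
  { rewrite hb1. unfold beta_rule. field. lra. }
  assert (hlb : 2*lambda1*beta1 < 1).
  { assert (hq : (2*lambda1*beta1 - 1)*(1-alpha1*lambda1) = - (alpha1*lambda1)) by nra.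
    assert (0 < alpha1*lambda1) by nra.
    destruct (Rlt_or_le (2*lambda1*beta1) 1) as [h|h]; auto.
    exfalso. assert (0 <= (2*lambda1*beta1 - 1)*(1-alpha1*lambda1)) by (apply Rmult_le_pos; lra). lra. }
  assert (hD : 0 < beta1^2*Sigma0 + sigma_u^2*dt) by (unfold dt; nra).
  assert (hlD : lambda1 * (beta1^2*Sigma0 + sigma_u^2*dt) = beta1*Sigma0).
  { rewrite hl1 at 1. unfold lambda_rule. field. lra. }
  assert (key : 2*beta1^2*Sigma0 < beta1^2*Sigma0 + sigma_u^2*dt).
  { assert (he : 2*beta1^2*Sigma0 = (2*lambda1*beta1) * (beta1^2*Sigma0 + sigma_u^2*dt)).
    { replace (2*beta1^2*Sigma0) with (2*beta1*(beta1*Sigma0)) by ring. rewrite <- hlD. ring. }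
    rewrite he. set (D := beta1^2*Sigma0 + sigma_u^2*dt) in *.
    assert (0 < (1 - 2*lambda1*beta1)*D) by (apply Rmult_lt_0_compat; lra). lra. }
  eexists; split; [apply ell_deriv; assumption|].
  apply Rdiv_lt_0_compat.
  - apply Rmult_lt_0_compat; [lra|]. lra.
  - nra.
Qed.
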